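(* Let $T>0$ and $I\geq 1$. Consider the system of renewal equations, for $1\leq i\leq I$, $t\in\mathbb{R}$, $x\geq 0$, $$\partial_t n_i(t,x)+\partial_x n_i(t,x)+d_i(t,x)\,n_i(t,x)=0,\qquad n_i(t,0)=\sum_{j=1}^I\int_0^\infty B_{j\rightarrow i}(t,x)\,n_j(t,x)\,dx,$$ with nonnegative coefficients $d_i$, $B_{j\rightarrow i}$ that are $T$-periodic in $t$. Let $(B^1_{j\rightarrow i},d^1_i)_{1\leq i,j\leq I}$ and $(B^2_{j\rightarrow i},d^2_i)_{1\leq i,j\leq I}$ be two such sets of coefficients, with associated dominant (Floquet) eigenvalues $\lambda_F^1$ and $\lambda_F^2$. For $\theta\in[0,1]$ set $$d_i^\theta=\theta d_i^1+(1-\theta)d_i^2,\qquad B^\theta_{j\rightarrow i}=(B^1_{j\rightarrow i})^\theta(B^2_{j\rightarrow i})^{1-\theta},$$ and let $\lambda_F^\theta$ be the dominant eigenvalue associated with the coefficients $(B^\theta_{j\rightarrow i},d_i^\theta)$. Then for every $\theta\in[0,1]$, $$\lambda_F^\theta\leq \theta\lambda_F^1+(1-\theta)\lambda_F^2.$$ That is, the dominant eigenvalue is convex with respect to the death rates $d_i$ and geometrically convex with respect to the birth rates $B_{j\rightarrow i}$.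
   Context: The dominant (Floquet) eigenvalue $\lambda_F$ of the system is the real number governing the growth of solutions (solutions behave like $e^{\lambda_F t}$ times a bounded term). When positive $T$-periodic eigenelements exist, $\lambda_F$ is the unique real $\lambda$ for which there exist nonnegative, nonzero, $T$-periodic $N_i$ with $\partial_t N_i+\partial_x N_i+(d_i+\lambda)N_i=0$, $N_i(t,0)=\sum_j\int_0^\infty B_{j\rightarrow i}N_j\,dx$, together with positive $T$-periodic dual eigenfunctions $\phi_j$ satisfying $-\partial_t\phi_j-\partial_x\phi_j+(d_j+\lambda)\phi_j=\sum_i B_{j\rightarrow i}(t,x)\phi_i(t,0)$. In general (Collatz–Wielandt type definition), $\lambda_F$ is the infimum of the reals $\mu$ for which there exist positive functions $\phi_{\mu,j}$, $T$-periodic in $t$, with $-\partial_t\phi_{\mu,j}(t,x)-\partial_x\phi_{\mu,j}(t,x)+[d_j(t,x)+\mu]\phi_{\mu,j}(t,x)\geq\sum_i B_{j\rightarrow i}(t,x)\phi_{\mu,i}(t,0)$; the two definitions coincide when eigenelements exist. *)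

(* Defs.v *)
From HB Require Import structures.
From mathcomp Require Import all_boot all_order all_algebra.
From mathcomp Require Import all_classical all_reals all_analysis.
Set Implicit Arguments. Unset Strict Implicit. Unset Printing Implicit Defensive.
Import Order.TTheory GRing.Theory Num.Theory.
Local Open Scope classical_set_scope.
Local Open Scope ring_scope.

(* Coefficients of the system with I equations:
   B j i t x = B_{j -> i}(t,x),  d i t x = d_i(t,x);  t in R, x >= 0. *)

Definition admissible_coeffs (R : realType) (I : nat) (T : R)
  (B : 'I_I -> 'I_I -> R -> R -> R) (d : 'I_I -> R -> R -> R) : Prop :=
  (forall j i t x, 0 <= x -> 0 <= B j i t x) /\
  (forall i t x, 0 <= x -> 0 <= d i t x) /\
  (forall j i t x, 0 <= x -> B j i (t + T) x = B j i t x) /\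
  (forall i t x, 0 <= x -> d i (t + T) x = d i t x).

(* Transport derivative (d_t + d_x) phi (t,x), i.e. the derivative of
   phi along the characteristic direction (1,1). *)
Definition transport_deriv (R : realType) (phi : R -> R -> R) (t x : R) : R :=
  derive1 (fun h : R => phi (t + h) (x + h)) 0.

Definition transport_derivable (R : realType) (phi : R -> R -> R) (t x : R) : Prop :=
  derivable (fun h : R => phi (t + h) (x + h)) 0 1.

Definition dual_supersolution (R : realType) (I : nat) (T : R)
  (B : 'I_I -> 'I_I -> R -> R -> R) (d : 'I_I -> R -> R -> R)
  (mu : R) (phi : 'I_I -> R -> R -> R) : Prop :=
  (forall j t x, 0 <= x -> 0 < phi j t x) /\
  (forall j t x, 0 <= x -> phi j (t + T) x = phi j t x) /\
  (forall j t x, 0 <= x -> transport_derivable (phi j) t x) /\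
  (forall j t x, 0 <= x ->
     \sum_(i < I) B j i t x * phi i t 0
       <= - transport_deriv (phi j) t x + (d j t x + mu) * phi j t x).

(* Dominant (Floquet) eigenvalue, Collatz--Wielandt definition, as an
   extended real (inf of the empty set is +oo). *)
Definition lambdaF (R : realType) (I : nat) (T : R)
  (B : 'I_I -> 'I_I -> R -> R -> R) (d : 'I_I -> R -> R -> R) : \bar R :=
  ereal_inf [set mu%:E | mu in [set mu : R | exists phi, dual_supersolution T B d mu phi]].

Definition B_theta (R : realType) (I : nat) (theta : R)
  (B1 B2 : 'I_I -> 'I_I -> R -> R -> R) : 'I_I -> 'I_I -> R -> R -> R :=
  fun j i t x => (B1 j i t x) `^ theta * (B2 j i t x) `^ (1 - theta).

Definition d_theta (R : realType) (I : nat) (theta : R)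
  (d1 d2 : 'I_I -> R -> R -> R) : 'I_I -> R -> R -> R :=
  fun i t x => theta * d1 i t x + (1 - theta) * d2 i t x.

(* Main.v *)
Require Import Defs.
From HB Require Import structures.
From mathcomp Require Import all_boot all_order all_algebra.
From mathcomp Require Import all_classical all_reals all_analysis.
Import Order.TTheory GRing.Theory Num.Theory.
From mathcomp Require Import ring lra.
Local Open Scope classical_set_scope.
Local Open Scope ring_scope.

Lemma amgm (R : realType) (th u v : R) : 0 <= th <= 1 -> 0 <= u -> 0 <= v ->
  u `^ th * v `^ (1 - th) <= th * u + (1 - th) * v.
Proof.
move=> /andP[th0 th1] u0 v0.
have [->|thn0] := eqVneq th 0.
  by rewrite subr0 powRr0 powRr1 // !mul1r mul0r add0r.
have [->|thn1] := eqVneq th 1.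
  by rewrite subrr powRr0 powRr1 // mulr1 mul0r addr0 mul1r.
have thp : 0 < th by rewrite lt_neqAle eq_sym thn0.
have thq : 0 < 1 - th by rewrite subr_gt0 lt_neqAle thn1.
have ip : 0 < th^-1 by rewrite invr_gt0.
have iq : 0 < (1 - th)^-1 by rewrite invr_gt0.
have := @conjugate_powR R (u `^ th) (v `^ (1 - th)) th^-1 (1 - th)^-1
  (powR_ge0 _ _) (powR_ge0 _ _) ip iq.
rewrite !invrK addrC subrK => /(_ erefl).
rewrite -!powRrM !mulfV ?gt_eqF // !powRr1 //.
by rewrite (mulrC u) (mulrC v).
Qed.

Lemma key (R : realType) (th a b P1 P2 : R) : 0 <= th <= 1 -> 0 <= a -> 0 <= b ->
  0 < P1 -> 0 < P2 ->
  a `^ th * b `^ (1 - th) <=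
  P1 `^ th * P2 `^ (1 - th) * (th * (a / P1) + (1 - th) * (b / P2)).
Proof.
move=> th01 a0 b0 P10 P20.
have ea : a = P1 * (a / P1) by rewrite mulrCA divff ?gt_eqF // mulr1.
have eb : b = P2 * (b / P2) by rewrite mulrCA divff ?gt_eqF // mulr1.
rewrite {1}ea {1}eb.
rewrite (powRM th (ltW P10) (divr_ge0 a0 (ltW P10))).
rewrite (powRM (1 - th) (ltW P20) (divr_ge0 b0 (ltW P20))).
rewrite mulrACA.
apply: ler_wpM2l; first by rewrite mulr_ge0 ?powR_ge0.
by apply: amgm => //; rewrite divr_ge0 // ltW.
Qed.

Lemma deriv_comb (R : realType) (th : R) (g1 g2 : R -> R) :
  derivable g1 0 1 -> derivable g2 0 1 -> 0 < g1 0 -> 0 < g2 0 ->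
  derivable (fun h => expR (th * ln (g1 h) + (1 - th) * ln (g2 h))) 0 1 /\
  derive1 (fun h => expR (th * ln (g1 h) + (1 - th) * ln (g2 h))) 0 =
  expR (th * ln (g1 0) + (1 - th) * ln (g2 0)) *
    (th * (derive1 g1 0 / g1 0) + (1 - th) * (derive1 g2 0 / g2 0)).
Proof.
move=> dg1 dg2 p1 p2.
have G1 : is_derive (0:R) (1:R) g1 (derive1 g1 0) by rewrite derive1E; exact/derivableP.
have G2 : is_derive (0:R) (1:R) g2 (derive1 g2 0) by rewrite derive1E; exact/derivableP.
have L1 : is_derive (0:R) (1:R) (@ln R \o g1) ((g1 0)^-1 * derive1 g1 0).
  exact: (is_derive1_comp (is_derive1_ln p1) G1).
have L2 : is_derive (0:R) (1:R) (@ln R \o g2) ((g2 0)^-1 * derive1 g2 0).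
  exact: (is_derive1_comp (is_derive1_ln p2) G2).
have S : is_derive (0:R) (1:R) (fun h => th * (@ln R \o g1) h + (1 - th) * (@ln R \o g2) h)
   (th * ((g1 0)^-1 * derive1 g1 0) + (1 - th) * ((g2 0)^-1 * derive1 g2 0)).
  exact: (is_deriveD (is_deriveZ th L1) (is_deriveZ (1 - th) L2)).
have E : is_derive (0:R) (1:R) (@expR R \o (fun h => th * (@ln R \o g1) h + (1 - th) * (@ln R \o g2) h))
  (expR (th * ln (g1 0) + (1 - th) * ln (g2 0)) *
   (th * ((g1 0)^-1 * derive1 g1 0) + (1 - th) * ((g2 0)^-1 * derive1 g2 0))).
  exact: (is_derive1_comp (is_derive_expR _) S).
split; first exact: (@ex_derive _ _ _ _ _ _ _ E).
rewrite derive1E (@derive_val _ _ _ _ _ _ _ E).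
by rewrite !(mulrC _^-1).
Qed.

Lemma expR_comb (R : realType) (th p q : R) : 0 < p -> 0 < q ->
  expR (th * ln p + (1 - th) * ln q) = p `^ th * q `^ (1 - th).
Proof. by move=> p0 q0; rewrite /powR !gt_eqF // expRD. Qed.

Lemma final (R : realType) (I : nat) (th : R) (a b : 'I_I -> R)
  (P1 P2 D1 D2 d1 d2 mu1 mu2 : R) :
  0 <= th <= 1 -> (forall i, 0 <= a i) -> (forall i, 0 <= b i) ->
  0 < P1 -> 0 < P2 ->
  \sum_(i < I) a i <= - D1 + (d1 + mu1) * P1 ->
  \sum_(i < I) b i <= - D2 + (d2 + mu2) * P2 ->
  \sum_(i < I) (a i) `^ th * (b i) `^ (1 - th) <=
   - (P1 `^ th * P2 `^ (1 - th) * (th * (D1 / P1) + (1 - th) * (D2 / P2)))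
   + ((th * d1 + (1 - th) * d2) + (th * mu1 + (1 - th) * mu2))
      * (P1 `^ th * P2 `^ (1 - th)).
Proof.
move=> th01 a0 b0 P10 P20 hS1 hS2.
set P := P1 `^ th * P2 `^ (1 - th).
have P0 : 0 <= P by rewrite mulr_ge0 ?powR_ge0.
have /andP[th0 th1] := th01.
apply: (@le_trans _ _ (\sum_(i < I) P * (th * (a i / P1) + (1 - th) * (b i / P2)))).
  by apply: ler_sum => i _; apply: key.
rewrite -mulr_sumr big_split /= -!mulr_sumr -!mulr_suml.
apply: (@le_trans _ _ (P * (th * ((- D1 + (d1 + mu1) * P1) / P1)
                          + (1 - th) * ((- D2 + (d2 + mu2) * P2) / P2)))).
  apply: ler_wpM2l => //; apply: lerD; apply: ler_wpM2l; rewrite ?subr_ge0 //.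
    by rewrite ler_pM2r ?invr_gt0.
  by rewrite ler_pM2r ?invr_gt0.
have E : P * (th * ((- D1 + (d1 + mu1) * P1) / P1)
                          + (1 - th) * ((- D2 + (d2 + mu2) * P2) / P2)) =
   - (P * (th * (D1 / P1) + (1 - th) * (D2 / P2)))
   + ((th * d1 + (1 - th) * d2) + (th * mu1 + (1 - th) * mu2)) * P.
  by field; rewrite ?gt_eqF.
by rewrite E.
Qed.

Theorem theorem1 (R : realType) (I : nat) (T : R)
  (B1 B2 : 'I_I -> 'I_I -> R -> R -> R) (d1 d2 : 'I_I -> R -> R -> R)
  (lam1 lam2 : R) :
  0 < T -> (1 <= I)%N ->
  admissible_coeffs T B1 d1 -> admissible_coeffs T B2 d2 ->
  lambdaF T B1 d1 = lam1%:E -> lambdaF T B2 d2 = lam2%:E ->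
  forall theta : R, 0 <= theta <= 1 ->
  (lambdaF T (B_theta theta B1 B2) (d_theta theta d1 d2)
     <= (theta * lam1 + (1 - theta) * lam2)%:E)%E.
Proof.
move=> T0 I1 [B1p _] [B2p _] h1 h2 th th01.
have /andP[th0 th1] := th01.
apply/lee_addgt0Pr => e e0.
have fin1 : lambdaF T B1 d1 \is a fin_num by rewrite h1.
have fin2 : lambdaF T B2 d2 \is a fin_num by rewrite h2.
have [_ [mu1 [phi1 S1] <-] lt1] := lb_ereal_inf_adherent e0 fin1.
have [_ [mu2 [phi2 S2] <-] lt2] := lb_ereal_inf_adherent e0 fin2.
have {}lt1 : mu1 < lam1 + e by rewrite -lte_fin EFinD -h1; exact: lt1.
have {}lt2 : mu2 < lam2 + e by rewrite -lte_fin EFinD -h2; exact: lt2.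
apply: (@le_trans _ _ (th * mu1 + (1 - th) * mu2)%:E); last first.
  rewrite -EFinD lee_fin.
  have t1 : th * mu1 <= th * (lam1 + e) by apply: ler_wpM2l => //; exact: ltW.
  have t2 : (1 - th) * mu2 <= (1 - th) * (lam2 + e).
    by apply: ler_wpM2l; [rewrite subr_ge0 | exact: ltW].
  lra.
apply: ereal_inf_lbound; exists (th * mu1 + (1 - th) * mu2) => //.
case: S1 => [pos1 [per1 [der1 ineq1]]].
case: S2 => [pos2 [per2 [der2 ineq2]]].
exists (fun j t x => expR (th * ln (phi1 j t x) + (1 - th) * ln (phi2 j t x))).
have gpos1 : forall j t x, 0 <= x -> 0 < phi1 j (t + 0) (x + 0).
  by move=> j t x x0; rewrite !addr0; apply: pos1.
have gpos2 : forall j t x, 0 <= x -> 0 < phi2 j (t + 0) (x + 0).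
  by move=> j t x x0; rewrite !addr0; apply: pos2.
split; first by move=> j t x _; exact: expR_gt0.
split; first by move=> j t x x0; rewrite /= per1 // per2.
split.
  move=> j t x x0.
  have := (@deriv_comb R th _ _ (der1 j t x x0) (der2 j t x x0) (gpos1 j t x x0) (gpos2 j t x x0)).1.
  by [].
move=> j t x x0.
rewrite /transport_deriv.
rewrite (@deriv_comb R th _ _ (der1 j t x x0) (der2 j t x x0) (gpos1 j t x x0) (gpos2 j t x x0)).2.
rewrite !addr0.
have ineq1' := ineq1 j t x x0.
have ineq2' := ineq2 j t x x0.
rewrite /transport_deriv in ineq1' ineq2'.
rewrite (@expR_comb R th _ _ (pos1 j t x x0) (pos2 j t x x0)).
rewrite /d_theta /B_theta.
have -> : \sum_(i < I) B1 j i t x `^ th * B2 j i t x `^ (1 - th) *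
     expR (th * ln (phi1 i t 0) + (1 - th) * ln (phi2 i t 0)) =
   \sum_(i < I) (B1 j i t x * phi1 i t 0) `^ th * (B2 j i t x * phi2 i t 0) `^ (1 - th).
  apply: eq_bigr => i _.
  rewrite (@expR_comb R th _ _ (pos1 i t 0 (lexx 0)) (pos2 i t 0 (lexx 0))).
  rewrite (powRM _ (B1p j i t x x0) (ltW (pos1 i t 0 (lexx 0)))).
  rewrite (powRM _ (B2p j i t x x0) (ltW (pos2 i t 0 (lexx 0)))).
  by rewrite mulrACA.
apply: final => //.
- by move=> i; apply: mulr_ge0; [exact: B1p | exact: (ltW (pos1 i t 0 (lexx 0)))].
- by move=> i; apply: mulr_ge0; [exact: B2p | exact: (ltW (pos2 i t 0 (lexx 0)))].
- exact: (pos1 j t x x0).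
- exact: (pos2 j t x x0).
Qed.
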